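(* Let $\pi$ be a two-stack sortable permutation and $D(\pi)=(\pi_1,\pi_2)$. Then either $\pi=C_1(\pi_1,\pi_2)$, or $\pi=C_2(\pi_1,\pi_2,i)$ for some $1\le i\le\operatorname{slmax}(\pi_2)$.
   Context: For a finite sequence $A$ of distinct integers, the stack-sorting operator $\mathcal{S}$ is defined by $\mathcal{S}(\epsilon)=\epsilon$ for the empty sequence and, if $A$ is non-empty with largest element $m$, writing $A=A_L\cdot(m)\cdot A_R$ (concatenation), $\mathcal{S}(A)=\mathcal{S}(A_L)\cdot\mathcal{S}(A_R)\cdot(m)$. A permutation $\sigma\in\mathfrak{S}_n$, $n\ge1$, viewed as a sequence, is two-stack sortable if $\mathcal{S}(\mathcal{S}(\sigma))$ is the identity. For a sequence $A$ of distinct integers, $P(A)$ is the permutation with the same relative order as $A$ ($P(\epsilon)=\epsilon$). For a permutation $\pi$ of length $n\ge1$ written $\pi=\pi_\ell\cdot(n)\cdot\pi_r$ (parts before and after the entry $n$), $D(\pi)=(P(\pi_\ell),P(\pi_r))$. For a sequence $\tau$: $\tau^{+k}$ adds $k$ to each element; for $k_1<k_2$, $\tau^{+(k_1,m,k_2)}$ adds $k_1$ to elements strictly smaller than $m$ and $k_2$ to the others. $\operatorname{slmax}(\sigma)$ is the number of left-to-right maxima of $\mathcal{S}(\sigma)$ ($\operatorname{slmax}(\epsilon)=0$). For permutations $\pi_1\in\mathfrak{S}_k$, $\pi_2\in\mathfrak{S}_\ell$ (possibly empty), $C_1(\pi_1,\pi_2)=\pi_1\cdot(k+\ell+1)\cdot\pi_2^{+k}$;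 for non-empty $\pi_1,\pi_2$, with $a_1,\dots,a_t$ the values of the left-to-right maxima of $\mathcal{S}(\pi_2)$ in order and $1\le i\le t$, $C_2(\pi_1,\pi_2,i)=\pi_1^{+(0,k,a_i)}\cdot(k+\ell+1)\cdot\pi_2^{+(k-1,a_i+1,k)}$. *)

(* Defs.v *)
From mathcomp Require Import all_boot.
Set Implicit Arguments. Unset Strict Implicit. Unset Printing Implicit Defensive.

(* Stack-sorting operator S, following the recursive definition on the maximum.
   The fuel argument is the size of the sequence (each recursive call is on a
   strictly shorter sequence). *)
Fixpoint ssort_fuel (fuel : nat) (A : seq nat) : seq nat :=
  match fuel with
  | 0 => [::]
  | f.+1 =>
    match A with
    | [::] => [::]
    | _ :: _ =>
      let m := foldr maxn 0 A in
      let i := index m A in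
      ssort_fuel f (take i A) ++ ssort_fuel f (drop i.+1 A) ++ [:: m]
    end
  end.

Definition S (A : seq nat) : seq nat := ssort_fuel (size A) A.

Definition is_perm (s : seq nat) : bool := perm_eq s (iota 1 (size s)).

Definition two_stack_sortable (s : seq nat) : Prop :=
  [/\ 1 <= size s, is_perm s & S (S s) = iota 1 (size s)].

Definition P (A : seq nat) : seq nat :=
  [seq (count (fun y => y < x) A).+1 | x <- A].

Definition D (pi : seq nat) : seq nat * seq nat :=
  let n := size pi in
  let i := index n pi in
  (P (take i pi), P (drop i.+1 pi)).

Definition shift (k : nat) (t : seq nat) : seq nat := [seq x + k | x <- t].
Definition shift3 (k1 m k2 : nat) (t : seq nat) : seq nat :=
  [seq (if x < m then x + k1 else x + k2) | x <- t].

(* values of the left-to-right maxima of a sequence of positive integers *)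
Fixpoint lrmax_aux (m : nat) (s : seq nat) : seq nat :=
  match s with
  | [::] => [::]
  | x :: t => if m < x then x :: lrmax_aux x t else lrmax_aux m t
  end.
Definition lrmax (s : seq nat) : seq nat := lrmax_aux 0 s.

Definition slmax (s : seq nat) : nat := size (lrmax (S s)).

Definition C1 (p1 p2 : seq nat) : seq nat :=
  let k := size p1 in let l := size p2 in
  p1 ++ (k + l + 1) :: shift k p2.

(* C_2(π1,π2,i), i is 1-based: a_i = nth 0 (lrmax (S π2)) (i-1) *)
Definition C2 (p1 p2 : seq nat) (i : nat) : seq nat :=
  let k := size p1 in let l := size p2 in
  let a := nth 0 (lrmax (S p2)) i.-1 in
  shift3 0 k a p1 ++ (k + l + 1) :: shift3 (k - 1) (a + 1) k p2.

(* Main.v *)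
Require Import Defs.
From mathcomp Require Import all_boot zify.
Set Implicit Arguments. Unset Strict Implicit. Unset Printing Implicit Defensive.

Ltac slia := repeat match goal with
  | H : is_true (_ \in _) |- _ => clear H
  | H : is_true (~~ _) |- _ => clear H
  | H : is_true (uniq _) |- _ => clear H
  | H : is_true (_ != _) |- _ => clear H
  | H : (_ \in _) = _ |- _ => clear H
  | H : (_ == _) = _ |- _ => clear H
  end; lia.

Lemma maxl_ub (w : seq nat) x : x \in w -> x <= foldr maxn 0 w.
Proof. elim: w => //= h t IH; rewrite in_cons => /orP[/eqP->|/IH]; lia. Qed.

Lemma maxl_lub (w : seq nat) m : {in w, forall x, x <= m} -> foldr maxn 0 w <= m.
Proof.
elim: w => //= h t IH H; rewrite geq_max H ?mem_head // IH // => x xt.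
by apply: H; rewrite in_cons xt orbT.
Qed.

Lemma maxl_mem (w : seq nat) : w != [::] -> foldr maxn 0 w \in w.
Proof.
elim: w => //= h t IH _; rewrite in_cons.
case: (t =P [::]) => [->|/eqP tn]; first by rewrite maxn0 eqxx.
have := IH tn. case: (leqP h (foldr maxn 0 t)) => H.
  by move=> ->; rewrite orbT.
by rewrite eqxx.
Qed.

Lemma split_first (w : seq nat) x : x \in w -> exists A B : seq nat, w = A ++ x :: B /\ x \notin A.
Proof.
elim: w => //= h t IH; rewrite in_cons; case: eqP => [->|hx] /= H.
  by exists [::], t.
have [A [B [-> nA]]] := IH H.
exists (h :: A), B; split => //; rewrite in_cons negb_or nA andbT.
by apply/eqP => E; apply: hx.
Qed.

Lemma fuel_irr f g w : size w <= f -> size w <= g -> ssort_fuel f w = ssort_fuel g w.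
Proof.
elim: f g w => [|f IH] [|g] [|h t] //= Hf Hg.
set m := maxn h _.
have Hi : (if h == m then 0 else (index m t).+1) < (size t).+1.
  by have := index_mem m (h :: t); rewrite (@maxl_mem (h :: t)).
move: Hi; set i := (if h == m then 0 else _) => Hi; clearbody i.
congr (_ ++ _ ++ _); apply: IH; rewrite ?size_take ?size_drop /=; try case: ifP => /=; lia.
Qed.

Lemma ssort_cons f h t : ssort_fuel f.+1 (h::t) =
  ssort_fuel f (take (index (foldr maxn 0 (h::t)) (h::t)) (h::t)) ++
  ssort_fuel f (drop (index (foldr maxn 0 (h::t)) (h::t)).+1 (h::t)) ++ [:: foldr maxn 0 (h::t)].
Proof. by []. Qed.

Lemma S_cat (A B : seq nat) (m : nat) : m \notin A -> {in A ++ B, forall x, x <= m} ->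
  S (A ++ m :: B) = S A ++ S B ++ [:: m].
Proof.
move=> nA ub.
have Hm : foldr maxn 0 (A ++ m :: B) = m.
  apply/eqP; rewrite eqn_leq maxl_ub ?mem_cat ?in_cons ?eqxx ?orbT // andbT.
  apply: maxl_lub => x; rewrite mem_cat in_cons => /orP[xA|/orP[/eqP->//|xB]];
  by apply: ub; rewrite mem_cat ?xA ?xB ?orbT.
have Hidx : index m (A ++ m :: B) = size A by rewrite index_cat (negbTE nA) /= eqxx addn0.
have Hd : drop (size A).+1 (A ++ m :: B) = B.
  by rewrite drop_cat ltnNge leqnSn /= subSnn /= drop0.
case Ew: (A ++ m :: B) => [|h t]; first by case: A {nA ub Hm Hidx Hd} Ew.
have Hs : size t = size A + size B.
  by have := congr1 size Ew; rewrite size_cat /= addnS => -[].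
rewrite /S [size (h :: t)]/= ssort_cons -Ew Hm Hidx take_size_cat // Hd.
congr (_ ++ _ ++ _); apply: fuel_irr; lia.
Qed.

Lemma S_nil : S [::] = [::]. Proof. by []. Qed.

Lemma decomp (w : seq nat) : w != [::] -> exists A B,
  [/\ w = A ++ foldr maxn 0 w :: B, foldr maxn 0 w \notin A &
      S w = S A ++ S B ++ [:: foldr maxn 0 w]].
Proof.
move=> wn; have [A [B [Ew nA]]] := split_first (maxl_mem wn).
exists A, B; split => //; rewrite {1}Ew S_cat // => x xAB; apply: maxl_ub.
by rewrite Ew mem_cat in_cons; move: xAB; rewrite mem_cat => /orP[]->; rewrite ?orbT.
Qed.

Lemma S_perm w : perm_eq (S w) w.
Proof.
elim: {w}(size w) {-2}w (leqnn (size w)) => [|n IH] w Hs.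
  by case: w Hs.
case: (w =P [::]) => [->//|/eqP wn].
have [A [B [Ew _ ->]]] := decomp wn.
have HA : size A <= n by move: Hs; rewrite {1}Ew size_cat /=; lia.
have HB : size B <= n by move: Hs; rewrite {1}Ew size_cat /=; lia.
set m := foldr maxn 0 w in Ew *.
rewrite [X in perm_eq _ X]Ew.
apply: (@perm_trans _ (A ++ B ++ [:: m])).
  by rewrite perm_cat ?perm_cat ?IH.
by rewrite perm_cat2l -cat1s perm_catC.
Qed.

Lemma S_map (f : nat -> nat) (w : seq nat) :
  {in w &, forall x y, x < y -> f x < f y} -> S (map f w) = map f (S w).
Proof.
elim: {w}(size w) {-2}w (leqnn (size w)) => [|n IH] w Hs Hf.
  by case: w Hs Hf.
case: (w =P [::]) => [->//|/eqP wn].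
have mw := maxl_mem wn.
have ub : {in w, forall x, x <= foldr maxn 0 w} by move=> x; apply: maxl_ub.
have [A [B [Ew nA ->]]] := decomp wn.
set m := foldr maxn 0 w in Ew nA mw ub *.
have subA : {subset A <= w} by move=> x; rewrite Ew mem_cat => ->.
have subB : {subset B <= w} by move=> x; rewrite Ew mem_cat in_cons => ->; rewrite !orbT.
have HA : size A <= n by move: Hs; rewrite {1}Ew size_cat /=; lia.
have HB : size B <= n by move: Hs; rewrite {1}Ew size_cat /=; lia.
rewrite {1}Ew map_cat /= S_cat.
- rewrite !map_cat IH // ?IH // => a b aX bX; apply: Hf; by [apply: subA | apply: subB].
- apply/mapP => -[x xA Efx].
  have xm : x < m by rewrite ltn_neqAle ub ?subA // andbT; apply/eqP => E; rewrite -E xA in nA.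
  by have := Hf _ _ (subA _ xA) mw xm; rewrite Efx ltnn.
- move=> y; rewrite -map_cat => /mapP [x xAB ->].
  have xw : x \in w by move: xAB; rewrite mem_cat => /orP[/subA|/subB].
  have := ub _ xw; rewrite leq_eqVlt => /orP[/eqP->//|xm].
  exact: ltnW (Hf _ _ xw mw xm).
Qed.

Lemma S_pat (w : seq nat) (x y z : nat) : uniq w -> x \in w -> y \in w -> z \in w ->
  index x w < index z w -> index z w < index y w -> y < x -> x < z ->
  index x (S w) < index y (S w).
Proof.
elim: {w}(size w) {-2}w (leqnn (size w)) x y z => [|n IH] w Hs x y z.
  by case: w Hs.
move=> Uw xw yw zw ixz izy yx xz.
have wn : w != [::] by case: w xw {Hs Uw yw zw ixz izy}.
have ub : {in w, forall x, x <= foldr maxn 0 w} by move=> v; apply: maxl_ub.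
have [A [B [Ew nA SE]]] := decomp wn.
set m := foldr maxn 0 w in Ew nA ub SE; clearbody m.
have HA : size A <= n by move: Hs; rewrite {1}Ew size_cat /=; (intros; slia).
have HB : size B <= n by move: Hs; rewrite {1}Ew size_cat /=; (intros; slia).
have : uniq (A ++ m :: B) by rewrite -Ew.
rewrite cat_uniq /= => /and4P [UA hAB mB UB].
have disj : forall v, v \in B -> v \notin A.
  by move=> v vB; apply/negP => vA; move: hAB; rewrite negb_or => /andP[_ /hasP]; apply; exists v.
have mem3 : forall v, v \in w -> [\/ v \in A, v = m | v \in B].
  by move=> v; rewrite Ew mem_cat in_cons => /orP[|/orP[/eqP|]]; [constructor 1|constructor 2|constructor 3].
have idx : forall v, index v w = if v \in A then index v A else size A + (if m == v then 0 else (index v B).+1).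
  by move=> v; rewrite Ew index_cat.
have sidxA : forall v, v \in A -> index v (S w) = index v (S A).
  by move=> v vA; rewrite SE index_cat (perm_mem (S_perm A)) vA.
have sidxB : forall v, v \in B -> index v (S w) = size (S A) + index v (S B).
  move=> v vB; rewrite SE index_cat (perm_mem (S_perm A)) (negbTE (disj _ vB)).
  by rewrite index_cat (perm_mem (S_perm B)) vB.
have xm : x != m by apply/eqP => E; have := ub _ zw; rewrite -E leqNgt xz.
have ym : y != m by apply/eqP => E; have := ub _ xw; rewrite -E leqNgt yx.
have mx : (m == x) = false by rewrite eq_sym (negbTE xm).
have my : (m == y) = false by rewrite eq_sym (negbTE ym).
move: ixz izy; rewrite !idx mx my.
have xAB : x \in A \/ x \in B.
  by case: (mem3 _ xw) => [xA|E|xB]; [left|rewrite E eqxx in xm|right].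
have yAB : y \in A \/ y \in B.
  by case: (mem3 _ yw) => [yA|E|yB]; [left|rewrite E eqxx in ym|right].
case: xAB => [xA|xB]; case: yAB => [yA|yB].
- rewrite xA yA sidxA // sidxA //.
  case zA: (z \in A).
    by move=> h1 h2; apply: (IH A HA x y z) => //; rewrite zA in h1 h2.
  have : index y A < size A by rewrite index_mem.
  by case: (m == z) => *; slia.
- rewrite sidxA // sidxB // => _ _.
  have : index x (S A) < size (S A) by rewrite index_mem (perm_mem (S_perm A)).
  by intros; slia.
- rewrite (negbTE (disj _ xB)) yA.
  have : index y A < size A by rewrite index_mem.
  by case: (z \in A); case: (m == z); intros; slia.
- rewrite (negbTE (disj _ xB)) (negbTE (disj _ yB)) sidxB // sidxB //.
  case: (mem3 _ zw) => [zA|->|zB].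
    rewrite zA; have : index z A < size A by rewrite index_mem.
    by intros; slia.
    by rewrite (negbTE nA) eqxx; intros; slia.
  rewrite (negbTE (disj _ zB)).
  have mz : (m == z) = false by apply/negbTE; apply/eqP => E; rewrite -E in zB; rewrite zB in mB.
  rewrite mz => h1 h2.
  suff : index x (S B) < index y (S B) by intros; slia.
  apply: (IH B HB x y z) => //; intros; slia.
Qed.

Lemma lrmax_mem_aux (s1 s2 : seq nat) (x m : nat) : m < x -> all (fun z => z < x) s1 ->
  x \in lrmax_aux m (s1 ++ x :: s2).
Proof.
elim: s1 m => [|h t IH] m mx /=; first by rewrite mx mem_head.
case/andP => hx ht; case: ifP => _; last exact: IH.
by rewrite in_cons IH ?orbT.
Qed.

Lemma count_lt (s : seq nat) (x y : nat) : x \in s -> x < y ->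
  count (fun z => z < x) s < count (fun z => z < y) s.
Proof.
elim: s => //= h t IH; rewrite in_cons => /orP[/eqP<-|xt] xy.
  rewrite ltnn xy add0n add1n ltnS; apply: sub_count => z /= zx; exact: (ltn_trans zx xy).
have hh : (h < x) <= (h < y) by apply/implyP => hx; lia.
have := IH xt xy; move: hh; case: (h < x); case: (h < y) => //=; lia.
Qed.

Lemma count_ltS (s : seq nat) (x : nat) : uniq s -> x \in s ->
  count (fun z => z < x.+1) s = (count (fun z => z < x) s).+1.
Proof.
elim: s => //= h t IH /andP[ht Ut]; rewrite in_cons => /orP[/eqP Eh|xt].
  subst h; rewrite ltnSn ltnn add1n add0n; congr _.+1; apply: eq_in_count => z zt /=.
  rewrite ltnS leq_eqVlt; case: eqP => // E; by rewrite -E zt in ht.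
rewrite IH //; have hx : h != x by apply/eqP => E; rewrite E xt in ht.
rewrite ltnS leq_eqVlt (negbTE hx) /=; lia.
Qed.

Lemma count_lt_iota (x s n : nat) : count (fun z => z < x) (iota s n) = minn (x - s) n.
Proof.
elim: n s => [|n IH] s /=; first by rewrite minn0.
rewrite IH; case: ltnP => h /=; lia.
Qed.

Theorem proposition8 (pi : seq nat) :
  two_stack_sortable pi ->
  pi = C1 (D pi).1 (D pi).2 \/
  exists i : nat,
    [/\ (D pi).1 != [::], (D pi).2 != [::], 1 <= i <= slmax (D pi).2
      & pi = C2 (D pi).1 (D pi).2 i].
Proof.
case=> Hn Hp HSS.
have Upi : uniq pi by rewrite (perm_uniq Hp) iota_uniq.
have [n Hsz] : {n | size pi = n} by exists (size pi).
rewrite Hsz in Hn Hp HSS.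
have memI : forall x : nat, x \in pi -> 1 <= x <= n.
  by move=> x; rewrite (perm_mem Hp) mem_iota; slia.
have npi : n \in pi by rewrite (perm_mem Hp) mem_iota; slia.
have cnt : forall x : nat, x \in pi -> count (fun z => z < x) pi = x.-1.
  move=> x xp; have := memI x xp => xb.
  by rewrite ((permP Hp) (fun z => z < x)) count_lt_iota; slia.
have [L [R [Epi nL]]] := split_first npi.
have Hi : index n pi = size L by rewrite Epi index_cat (negbTE nL) /= eqxx addn0.
have HD : D pi = (P L, P R).
  rewrite /D /= Hsz Hi Epi take_size_cat //.
  by rewrite drop_cat ltnNge leqnSn /= subSnn /= drop0.
rewrite HD /=.
have UL : uniq L by move: Upi; rewrite Epi cat_uniq => /and3P[].
have UR : uniq R by move: Upi; rewrite Epi cat_uniq /= => /and4P[].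
have nR : n \notin R by move: Upi; rewrite Epi cat_uniq /= => /and4P[].
have disj : forall v : nat, v \in R -> v \notin L.
  move=> v vR; apply/negP => vL; move: Upi; rewrite Epi cat_uniq => /and3P[_ /hasP H _].
  by apply: H; exists v; rewrite // in_cons vR orbT.
have Lpi : {subset L <= pi} by move=> v; rewrite Epi mem_cat => ->.
have Rpi : {subset R <= pi} by move=> v; rewrite Epi mem_cat in_cons => ->; rewrite !orbT.
have SE : S pi = S L ++ S R ++ [:: n].
  rewrite {1}Epi S_cat // => v; rewrite mem_cat => /orP[/Lpi|/Rpi] /memI; slia.
have Hsize : n = size L + size R + 1 by rewrite -Hsz Epi size_cat /=; slia.
have SLk : size (S L) = size L by rewrite (perm_size (S_perm L)).
have memSL : forall v : nat, (v \in S L) = (v \in L) by move=> v; rewrite (perm_mem (S_perm L)).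
have memSR : forall v : nat, (v \in S R) = (v \in R) by move=> v; rewrite (perm_mem (S_perm R)).
have USpi : uniq (S pi) by rewrite (perm_uniq (S_perm pi)).
have memSpi : forall v : nat, (v \in S pi) = (v \in pi) by move=> v; rewrite (perm_mem (S_perm pi)).
have no231 : forall x y z : nat, x \in pi -> y \in pi -> z \in pi ->
    index x (S pi) < index z (S pi) -> index z (S pi) < index y (S pi) -> y < x -> x < z -> False.
  move=> x y z xp yp zp h1 h2 yx xz.
  have := @S_pat (S pi) x y z USpi; rewrite !memSpi => /(_ xp yp zp h1 h2 yx xz).
  rewrite HSS => h.
  have xi : x \in iota 1 n by rewrite -HSS (perm_mem (S_perm _)) memSpi.
  have yi : y \in iota 1 n by rewrite -HSS (perm_mem (S_perm _)) memSpi.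
  have := sorted_ltn_index ltn_trans (iota_ltn_sorted 1 n) x y xi yi h; slia.
have idxL : forall v : nat, v \in L -> index v (S pi) = index v (S L).
  by move=> v vL; rewrite SE index_cat memSL vL.
have idxR : forall v : nat, v \in R -> index v (S pi) = size L + index v (S R).
  move=> v vR; rewrite SE index_cat memSL (negbTE (disj _ vR)) index_cat memSR vR.
  by rewrite SLk.
have idxRlt : forall v : nat, v \in L -> index v (S L) < size L.
  by move=> v vL; rewrite -SLk index_mem memSL.
set M := foldr maxn 0 L.
have ubM : forall x : nat, x \in L -> x <= M by move=> x; apply: maxl_ub.
have cntLR : forall x : nat, x \in pi -> count (fun z => z < x) L + count (fun z => z < x) R = x.-1.
  move=> x xp; rewrite -(cnt x xp) [in RHS]Epi count_cat /= ltnNge.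
  by have := memI x xp => /andP[_ ->]; rewrite add0n.
have fact1 : forall x y : nat, x \in L -> x != M -> y \in R -> x < y.
  move=> x y xL xM yR; rewrite ltnNge leq_eqVlt; apply/negP => /orP[/eqP E|yx].
    by move: (disj _ yR); rewrite E xL.
  have Ln : L != [::] by case: (L) xL.
  have [A [B [EL nA SL]]] := decomp Ln; rewrite -/M in EL nA SL.
  have USL : uniq (S L) by rewrite (perm_uniq (S_perm L)).
  have xs : x \in S A ++ S B.
    move: xL; rewrite -memSL SL catA mem_cat mem_seq1 (negbTE xM) orbF //.
  have Ms : M \notin S A ++ S B.
    by move: USL; rewrite SL catA cat_uniq /= => /and3P[_ ]; rewrite orbF.
  have ML : M \in L by apply: maxl_mem.
  apply: (no231 x y M (Lpi _ xL) (Rpi _ yR) (Lpi _ ML)) => //.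
  - by rewrite !idxL // SL catA !index_cat xs (negbTE Ms) /= eqxx addn0 -index_cat index_mem.
  - by rewrite idxL // idxR //; have := idxRlt _ ML; slia.
  - by rewrite ltn_neqAle xM ubM.
have fact2 : forall y z : nat, y \in R -> z \in R -> y < M -> M < z ->
    index y (S R) < index z (S R).
  move=> y z yR zR yM Mz.
  have ML : M \in L by apply: maxl_mem; apply/eqP => EL; move: yM; rewrite /M EL.
  case: (ltngtP (index y (S R)) (index z (S R))) => // h.
    exfalso; apply: (no231 M y z (Lpi _ ML) (Rpi _ yR) (Rpi _ zR)) => //.
    - by rewrite idxL // idxR //; have := idxRlt _ ML; slia.
    - by rewrite !idxR //; slia.
  move/(congr1 (nth 0 (S R))): h; rewrite !nth_index ?memSR // => E.
  by subst z; slia.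
have cntL0 : forall x : nat, x \in L -> x != M -> count (fun z => z < x) R = 0.
  move=> x xL xM; rewrite (eq_in_count (a2 := pred0)) ?count_pred0 // => y yR /=.
  by rewrite ltnNge ltnW ?fact1.
have sPL : size (P L) = size L by rewrite size_map.
have sPR : size (P R) = size R by rewrite size_map.
case: (boolP (has (fun y => y < M) R)) => [hasM|/hasPn noM].
2:{
  left.
  have LR : forall x y : nat, x \in L -> y \in R -> x < y.
    move=> x y xL yR; rewrite ltn_neqAle; apply/andP; split.
      by apply/eqP => E; move: (disj _ yR); rewrite -E xL.
    by apply: (leq_trans (ubM _ xL)); rewrite leqNgt noM.
  rewrite /C1 /= sPL sPR {1}Epi -Hsize; congr (_ ++ _ :: _).
    apply/esym/map_id_in => x xL /=.
    have c0 : count (fun z => z < x) R = 0.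
      by rewrite (eq_in_count (a2 := pred0)) ?count_pred0 // => y yR /=; rewrite ltnNge ltnW ?LR.
    have := cntLR x (Lpi _ xL); have := memI x (Lpi _ xL); slia.
  rewrite /shift -map_comp; apply/esym/map_id_in => y yR /=.
  have ck : count (fun z => z < y) L = size L.
    by rewrite (eq_in_count (a2 := predT)) ?count_predT // => x xL /=; rewrite LR.
  have := cntLR y (Rpi _ yR); have := memI y (Rpi _ yR); slia.
}
have ML : M \in L by apply: maxl_mem; apply/eqP => EL; move: hasM; rewrite /M EL /=; apply/negP; rewrite -all_predC; apply/allP.
have kpos : 0 < size L by case: (L) ML.
have [y1 y1R y1M] := hasP hasM.
have cLM : count (fun z => z < M) L = (size L).-1.
  have := count_predC (fun z => z < M) L.
  rewrite (eq_in_count (a1 := predC _) (a2 := pred1 M)) ?count_uniq_mem ?ML //.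
    by move=> <-; rewrite addn1.
  by move=> z zL /=; rewrite -leqNgt eqn_leq ubM.
set a := count (fun z => z < M) R.
set F := filter (fun y => y < M) R.
have Fn : F != [::] by rewrite -has_filter.
set y0 := foldr maxn 0 F.
have := maxl_mem Fn; rewrite -/y0 mem_filter => /andP [y0M y0R].
have y0max : forall y : nat, y \in R -> y < M -> y <= y0.
  by move=> y yR yM; apply: maxl_ub; rewrite mem_filter yM yR.
have cMy0 : a = (count (fun z => z < y0) R).+1.
  rewrite -count_ltS // /a; apply: eq_in_count => z zR /=.
  rewrite ltnS; apply/idP/idP => [zM|zy0]; first exact: y0max.
  exact: leq_ltn_trans zy0 y0M.
set f := fun x : nat => (count (fun y => y < x) R).+1.
have fmono : {in R &, forall u v, u < v -> f u < f v}.
  by move=> u v uR _ uv; rewrite /f ltnS; exact: count_lt.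
have SPR : S (P R) = map f (S R) by rewrite -S_map.
have y0SR : y0 \in S R by rewrite memSR.
have [s1 [s2 [ESR ny0]]] := split_first y0SR.
have s1lt : forall z : nat, z \in s1 -> z < y0.
  move=> z zs1.
  have zR : z \in R by rewrite -memSR ESR mem_cat zs1.
  have zy : z != y0 by apply/eqP => E; move: ny0; rewrite -E zs1.
  case: (ltnP z M) => zM; first by rewrite ltn_neqAle zy y0max.
  have Mz : M < z.
    by rewrite ltn_neqAle zM andbT; apply/eqP => E; move: (disj _ zR); rewrite -E ML.
  have := fact2 y0 z y0R zR y0M Mz; rewrite ESR !index_cat zs1 (negbTE ny0) /= eqxx addn0.
  have : index z s1 < size s1 by rewrite index_mem.
  slia.
have aL : a \in lrmax (S (P R)).
  rewrite SPR ESR map_cat /= /lrmax cMy0; apply: lrmax_mem_aux => //.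
  apply/allP => u /mapP [z zs1 ->]; rewrite /f ltnS; apply: count_lt; last exact: s1lt.
  by rewrite -memSR ESR mem_cat zs1.
right; exists (index a (lrmax (S (P R)))).+1; split.
- by rewrite -size_eq0 sPL size_eq0; apply/eqP => E; rewrite E in ML.
- by rewrite -size_eq0 sPR size_eq0; apply/eqP => E; rewrite E in y1R.
- by rewrite /slmax /= index_mem.
rewrite /C2 /= sPL sPR nth_index // {1}Epi -Hsize; congr (_ ++ _ :: _).
  rewrite /shift3 /P -map_comp; apply/esym/map_id_in => x xL /=.
  have := cntLR x (Lpi _ xL); have := memI x (Lpi _ xL).
  case: (eqVneq x M) => [->|xM].
    by rewrite cLM; case: ifP; slia.
  have c0 := cntL0 x xL xM.
  have cx : count (fun z => z < x) L < count (fun z => z < M) L.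
    by apply: count_lt; rewrite // ltn_neqAle xM ubM.
  by case: ifP; slia.
rewrite /shift3 /P -map_comp; apply/esym/map_id_in => y yR /=.
have := cntLR y (Rpi _ yR); have := memI y (Rpi _ yR).
case: (ltnP y M) => yM.
  have cLy : count (fun z => z < y) L = count (fun z => z < M) L.
    apply: eq_in_count => z zL /=; case: (eqVneq z M) => [->|zM].
      by rewrite ltnn; apply/negbTE; rewrite -leqNgt ltnW.
    by rewrite fact1 // ltn_neqAle zM ubM.
  have cRy : count (fun z => z < y) R < a by apply: count_lt.
  by case: ifP; slia.
have Myy : M < y by rewrite ltn_neqAle yM andbT; apply/eqP => E; move: (disj _ yR); rewrite -E ML.
have cLy : count (fun z => z < y) L = size L.
  rewrite (eq_in_count (a2 := predT)) ?count_predT // => z zL /=.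
  exact: leq_ltn_trans (ubM _ zL) Myy.
have cRy : a <= count (fun z => z < y) R.
  by apply: sub_count => z /= zM; exact: ltn_trans zM Myy.
by case: ifP; slia.
Qed.
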